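(* For every $n\ge 0$, the Wiener index of $S_n$ is \[ \d(S_n)=\frac{2n(2n+1)}{3}\binom{2n-1}{n}, \] and consequently $\d(S_n)\sim \frac{2}{3\sqrt{\pi}}\,4^n n^{3/2}$ as $n\to\infty$.
   Context: $S_n$ is the lattice (under inclusion) of order ideals of the shifted staircase poset $\{(i,j)\in\mathbb Z^2:1\le i\le j\le n\}$ with componentwise order; $|S_n|=2^n$. For a finite poset $Q$, $\d(Q)=\sum_{(p,q)\in Q\times Q}\d(p,q)$ where $\d(p,q)$ is the graph distance in the Hasse diagram of $Q$, summed over ordered pairs. Convention: $\binom{-1}{0}=1$. *)

(* Defs.v *)
From mathcomp Require Import all_boot.
From Stdlib Require Import Reals.
Set Implicit Arguments. Unset Strict Implicit. Unset Printing Implicit Defensive.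

Section GraphDist.
Variable V : finType.
Variable e : rel V.

Fixpoint ball (k : nat) (x : V) : {set V} :=
  if k is k'.+1 then ball k' x :|: [set y | [exists z in ball k' x, e z y]]
  else [set x].

(* graph distance: least k such that y is within k steps of x.  In a connected
   graph this is < #|V|, so the bounded search below is exact. *)
Definition gdist (x y : V) : nat := find (fun k => y \in ball k x) (iota 0 #|V|).
End GraphDist.

Section Hasse.
Variable V : finType.
Variable inQ : pred V.
Variable lt : rel V.

Definition covers (x y : V) : bool :=
  [&& inQ x, inQ y, lt x y & ~~ [exists z, [&& inQ z, lt x z & lt z y]]].

Definition hasse_edge (x y : V) : bool := covers x y || covers y x.

(* Wiener index: sum over ordered pairs of graph distances *)
Definition wiener : nat :=
  \sum_(p | inQ p) \sum_(q | inQ q) gdist hasse_edge p q.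
End Hasse.

(* Element (i,j) with 1 <= i <= j <= n is encoded 0-indexed as (i-1, j-1) : 'I_n * 'I_n *)
Definition cell (n : nat) := ('I_n * 'I_n)%type.

Definition in_stair (n : nat) (c : cell n) : bool := (c.1 <= c.2)%N.

Definition cell_le (n : nat) (c d : cell n) : bool := (c.1 <= d.1)%N && (c.2 <= d.2)%N.

Definition is_ideal (n : nat) (A : {set cell n}) : bool :=
  [forall c, (c \in A) ==> in_stair c] &&
  [forall c, forall d, [&& d \in A, in_stair c & cell_le c d] ==> (c \in A)].

Definition S_lt (n : nat) (A B : {set cell n}) : bool := A \proper B.

Definition wiener_S (n : nat) : nat := wiener (@is_ideal n) (@S_lt n).

(* Main.v *)
Require Import Defs.
From mathcomp Require Import all_boot zify.
Set Implicit Arguments. Unset Strict Implicit. Unset Printing Implicit Defensive.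

Section Dist.
Variable n : nat.
Implicit Types A B X Y Z : {set cell n}.

Lemma idealP A : reflect ((forall c, c \in A -> in_stair c) /\
   (forall c d, d \in A -> in_stair c -> cell_le c d -> c \in A)) (is_ideal A).
Proof.
apply: (iffP andP) => [[/forallP H1 /forallP H2]|[H1 H2]]; split.
- by move=> c /(implyP (H1 c)).
- move=> c d dA sc le; move/forallP: (H2 c) => /(_ d) /implyP; apply.
  by rewrite dA sc le.
- by apply/forallP => c; apply/implyP; apply: H1.
- apply/forallP => c; apply/forallP => d; apply/implyP => /and3P [? ? ?].
  by apply: (H2 c d).
Qed.

Definition w (c : cell n) : nat := c.1 + c.2.

Lemma le_w c d : cell_le c d -> c != d -> w c < w d.
Proof.
case: c d => [c1 c2] [d1 d2]; rewrite /cell_le /w xpair_eqE negb_and /=.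
rewrite -!val_eqE /= => /andP[h1 h2] ne; lia.
Qed.

Lemma remove_max X Y m : is_ideal X -> is_ideal Y -> m \in Y :\: X ->
  (forall c, c \in Y :\: X -> w c <= w m) -> is_ideal (Y :\ m).
Proof.
move=> /idealP[X1 X2] /idealP[Y1 Y2]; rewrite inE => /andP[mX mY] mx.
apply/idealP; split.
  by move=> c; rewrite !inE => /andP[_]; apply: Y1.
move=> c d; rewrite !inE => /andP[dm dY] sc le.
rewrite (Y2 c d) // andbT.
apply/negP=> /eqP cm; subst c.
have dX : d \notin X.
  by apply/negP=> dX; move: mX; rewrite (X2 m d).
have := mx d; rewrite inE dX dY => /(_ isT).
by have := le_w le; rewrite eq_sym dm => /(_ isT); lia.
Qed.

Lemma add_min X Y m : is_ideal X -> is_ideal Y -> m \in X :\: Y ->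
  (forall c, c \in X :\: Y -> w m <= w c) -> is_ideal (m |: Y).
Proof.
move=> /idealP[X1 X2] /idealP[Y1 Y2]; rewrite inE => /andP[mY mX] mn.
apply/idealP; split.
  by move=> c; rewrite !inE => /orP[/eqP->|]; [apply: X1|apply: Y1].
move=> c d; rewrite !inE => /orP[/eqP->|dY] sc le; last by rewrite (Y2 c d) ?orbT.
case: (eqVneq c m) => [//|cm]; apply/orP; right.
apply/negPn/negP => cY.
have := mn c; rewrite inE cY (X2 c m) // => /(_ isT).
by have := le_w le cm; lia.
Qed.

Definition dd A B := #|A :\: B| + #|B :\: A|.

Lemma card_sub3 A B C : #|A :\: C| <= #|A :\: B| + #|B :\: C|.
Proof.
apply: leq_trans (_ : #|(A :\: B) :|: (B :\: C)| <= _).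
  apply: subset_leq_card; apply/subsetP => x; rewrite !inE.
  by case: (x \in A); case: (x \in B); case: (x \in C).
by rewrite cardsU leq_subr.
Qed.

Lemma dd_tri A B C : dd A C <= dd A B + dd B C.
Proof.
rewrite /dd; have := card_sub3 A B C; have := card_sub3 C B A; lia.
Qed.

Lemma dd_sym A B : dd A B = dd B A.
Proof. by rewrite /dd addnC. Qed.

Lemma dd0 A : dd A A = 0.
Proof. by rewrite /dd setDv cards0. Qed.

Lemma dd0P A B : dd A B = 0 -> A = B.
Proof.
rewrite /dd => h; apply/eqP; rewrite eqEsubset.
have h1 : #|A :\: B| = 0 by lia.
have h2 : #|B :\: A| = 0 by lia.
by move/eqP: h1; rewrite cards_eq0 setD_eq0 => ->; move/eqP: h2; rewrite cards_eq0 setD_eq0.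
Qed.

Lemma dd_add1 A m : m \notin A -> dd A (m |: A) = 1.
Proof.
move=> mA; rewrite /dd.
have -> : A :\: (m |: A) = set0.
  by apply/setP=> x; rewrite !inE; case: (x \in A); rewrite ?andbF ?andbT ?orbT.
have -> : (m |: A) :\: A = [set m].
  apply/setP=> x; rewrite !inE; case: eqP => [->|]; first by rewrite mA.
  by case: (x \in A).
by rewrite cards0 cards1.
Qed.

Lemma dd_card A B : dd A B <= n * n.
Proof.
rewrite /dd.
have -> : #|A :\: B| + #|B :\: A| = #|(A :\: B) :|: (B :\: A)|.
  rewrite cardsU.
  have -> : (A :\: B) :&: (B :\: A) = set0.
    by apply/setP=> x; rewrite !inE; case: (x \in A); case: (x \in B).
  by rewrite cards0 subn0.
apply: leq_trans (max_card _) _.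
by rewrite card_prod card_ord.
Qed.


Lemma ex_max (S : {set cell n}) m0 : m0 \in S ->
  exists2 m, m \in S & forall c, c \in S -> w c <= w m.
Proof.
move=> h; case: (arg_maxnP (P := fun c => c \in S) w h) => m mS mx.
by exists m.
Qed.

Lemma ex_min (S : {set cell n}) m0 : m0 \in S ->
  exists2 m, m \in S & forall c, c \in S -> w m <= w c.
Proof.
move=> h; case: (arg_minnP (P := fun c => c \in S) w h) => m mS mx.
by exists m.
Qed.

Notation cov := (covers (@is_ideal n) (@S_lt n)).
Notation E := (hasse_edge (@is_ideal n) (@S_lt n)).

Lemma covers_ex X Y : cov X Y -> exists2 m, m \notin X & Y = m |: X.
Proof.
rewrite /covers => /and4P[iX iY pXY nb].
have /properP[_ [m0 m0Y m0X]] := pXY.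
have m0D : m0 \in Y :\: X by rewrite inE m0X.
have [m mD mx] := ex_max m0D.
have iZ := remove_max iX iY mD mx.
move: mD; rewrite inE => /andP[mX mY].
exists m => //.
have sXZ : X \subset Y :\ m.
  apply/subsetP => x xX; rewrite !inE (subsetP (proper_sub pXY)) // andbT.
  by apply/negP=> /eqP xm; subst x; rewrite xX in mX.
have eXZ : X = Y :\ m.
  apply/eqP; rewrite eqEsubset sXZ /=.
  apply/negPn/negP => nZX.
  move/negP: nb; apply; apply/existsP; exists (Y :\ m).
  rewrite iZ /S_lt properE sXZ nZX /=.
  by rewrite properD1.
by rewrite eXZ setD1K.
Qed.

Lemma cover_add X m : is_ideal X -> m \notin X -> is_ideal (m |: X) -> cov X (m |: X).
Proof.
move=> iX mX iY; rewrite /covers iX iY /S_lt /=.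
have p : X \proper m |: X.
  rewrite properE subsetUr /=; apply/negP => /subsetP /(_ m).
  by rewrite setU11 (negbTE mX) => /(_ isT).
rewrite p /=; apply/negP => /existsP [Z /and3P[_ p1 p2]].
have := proper_card p1; have := proper_card p2; rewrite cardsU1 mX; lia.
Qed.

Lemma ball_refl k X : X \in ball E k X.
Proof. by elim: k => [|k IH] /=; rewrite ?set11 // inE IH. Qed.

Lemma cov_ideal X Y : cov X Y -> is_ideal X && is_ideal Y.
Proof. by rewrite /covers => /and4P[-> ->]. Qed.

Lemma edge_dd X Y : E X Y -> [&& is_ideal X, is_ideal Y & dd X Y == 1].
Proof.
case/orP=> h; have /andP[-> ->] := cov_ideal h; have [m mX ->] := covers_ex h.
  by rewrite dd_add1.
by rewrite dd_sym dd_add1.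
Qed.

Lemma ball_fwd A k B : is_ideal A -> B \in ball E k A -> is_ideal B && (dd A B <= k).
Proof.
move=> iA; elim: k B => [|k IH] B /=.
  by rewrite inE => /eqP ->; rewrite iA dd0.
rewrite !inE => /orP[/IH /andP[-> h]|/existsP[z /andP[zb ezB]]].
  by rewrite ltnW.
have /andP[iz hz] := IH z zb.
have /and3P[_ -> /eqP h1] := edge_dd ezB.
by have := dd_tri A z B; lia.
Qed.

Lemma dd_rem A B m : m \in B :\: A -> dd A (B :\ m) = (dd A B).-1.
Proof.
rewrite inE => /andP[mA mB]; rewrite /dd.
have -> : A :\: (B :\ m) = A :\: B.
  apply/setP=> x; rewrite !inE; case: (x =P m) => [->|//].
  by rewrite (negbTE mA) !andbF.
have -> : (B :\ m) :\: A = (B :\: A) :\ m.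
  by apply/setP=> x; rewrite !inE; case: (x == m); case: (x \in A).
rewrite [#|B :\: A|](cardsD1 m) inE mA mB; lia.
Qed.

Lemma dd_addm A B m : m \in A :\: B -> dd A (m |: B) = (dd A B).-1.
Proof.
rewrite inE => /andP[mB mA]; rewrite /dd.
have -> : (m |: B) :\: A = B :\: A.
  apply/setP=> x; rewrite !inE; case: (x =P m) => [->|//].
  by rewrite mA (negbTE mB).
have -> : A :\: (m |: B) = (A :\: B) :\ m.
  by apply/setP=> x; rewrite !inE; case: (x == m); case: (x \in B).
rewrite [#|A :\: B|](cardsD1 m) inE mA mB; lia.
Qed.

Lemma ball_bwd A k : is_ideal A -> forall B, is_ideal B -> dd A B <= k ->
  B \in ball E k A.
Proof.
move=> iA; elim: k => [|k IH] B iB h /=.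
  by rewrite inE; apply/eqP; symmetry; apply: dd0P; lia.
rewrite inE; case: (leqP (dd A B) k) => hk; first by rewrite IH.
apply/orP; right; rewrite inE; apply/existsP.
case: (set_0Vmem (B :\: A)) => [e0|[m0 m0D]].
  case: (set_0Vmem (A :\: B)) => [e1|[m0 m0D]].
    by move: hk; rewrite /dd e0 e1 !cards0.
  have [m mD mn] := ex_min m0D.
  have iB' := add_min iA iB mD mn.
  exists (m |: B); rewrite IH //; last by rewrite dd_addm //; lia.
  move: mD; rewrite inE => /andP[mB _].
  by apply/orP; right; apply: cover_add.
have [m mD mx] := ex_max m0D.
have iB' := remove_max iA iB mD mx.
exists (B :\ m); rewrite IH //; last by rewrite dd_rem //; lia.
move: mD; rewrite inE => /andP[_ mB].
have hB : m |: (B :\ m) = B by rewrite setD1K.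
apply/orP; left; have := @cover_add (B :\ m) m iB'; rewrite hB; apply => //.
by rewrite !inE eqxx.
Qed.

Lemma find_thr (p : pred nat) d N : d < N -> (forall k, p k = (d <= k)) ->
  find p (iota 0 N) = d.
Proof.
move=> dN hp.
rewrite -(subnKC (ltnW dN)) iotaD find_cat.
have -> : has p (iota 0 d) = false.
  apply/negP => /hasP[x]; rewrite mem_iota hp; lia.
rewrite /= add0n.
rewrite size_iota.
have : 0 < N - d by rewrite subn_gt0.
by case: (N - d) => [//|j] _; rewrite /= hp leqnn addn0.
Qed.

Lemma gdist_dd A B : is_ideal A -> is_ideal B -> gdist E A B = dd A B.
Proof.
move=> iA iB; rewrite /gdist; apply: find_thr.
  apply: leq_ltn_trans (dd_card A B) _.
  rewrite -cardsT -powersetT card_powerset cardsT card_prod card_ord.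
  exact: ltn_expl.
move=> k; apply/idP/idP.
  by move/(ball_fwd iA)/andP=> [].
exact: ball_bwd.
Qed.

End Dist.


Lemma card_sum m (P : pred 'I_m) : #|[set x | P x]| = \sum_(x < m) P x.
Proof.
rewrite -sum1_card big_mkcond /=; apply: eq_bigr => x _; rewrite inE.
by case: (P x).
Qed.

Lemma card_range m l k : #|[set x : 'I_m | l <= x < k]| = minn k m - l.
Proof.
rewrite card_sum; elim: m => [|m IH]; first by rewrite big_ord0; lia.
rewrite big_ord_recr /= IH.
case: (leqP l m) => h1; case: (ltnP m k) => h2 /=; lia.
Qed.

Lemma card_lt m k : #|[set x : 'I_m | x < k]| = minn k m.
Proof.
have := card_range m 0 k; rewrite subn0 => <-.
by apply: eq_card => x; rewrite !inE.
Qed.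

Lemma down_card m (D : {set 'I_m}) :
  (forall x y : 'I_m, x \in D -> y <= x -> y \in D) ->
  forall x : 'I_m, (x \in D) = (x < #|D|).
Proof.
move=> hD x; apply/idP/idP => [xD|].
  have : [set y : 'I_m | y < x.+1] \subset D.
    by apply/subsetP => y; rewrite inE => hy; apply: hD xD _.
  by move/subset_leq_card; rewrite card_lt (minn_idPl (ltn_ord x)).
apply: contraLR => xD.
have : D \subset [set y : 'I_m | y < x].
  apply/subsetP => y yD; rewrite inE ltnNge; apply/negP => hy.
  by move: xD; rewrite (hD y x).
move/subset_leq_card; rewrite card_lt; lia.
Qed.

Definition kk m (A : {set cell m}) := #|[set x : 'I_m | (x, x) \in A]|.

Lemma kk_le m (A : {set cell m}) : kk A <= m.
Proof. by rewrite /kk; apply: leq_trans (max_card _) _; rewrite card_ord. Qed.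

Lemma diag_char m (A : {set cell m}) : is_ideal A ->
  forall x : 'I_m, ((x, x) \in A) = (x < kk A).
Proof.
move=> /idealP[_ hA] x.
have hd : forall x y : 'I_m, x \in [set z : 'I_m | (z, z) \in A] -> y <= x ->
   y \in [set z : 'I_m | (z, z) \in A].
  move=> y z; rewrite !inE => yA zy; apply: (hA _ (y, y)) => //.
    by rewrite /in_stair.
  by rewrite /cell_le /= zy.
have := down_card hd x; rewrite inE => ->; by [].
Qed.

Section Rec.
Variable n : nat.

Definition sig (c : cell n) : cell n.+1 := (widen_ord (leqnSn n) c.1, lift ord0 c.2).

Lemma sig1 c : ((sig c).1 : nat) = c.1. Proof. by []. Qed.
Lemma sig2 c : ((sig c).2 : nat) = c.2.+1. Proof. exact: lift0. Qed.

Lemma sig_inj : injective sig.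
Proof.
move=> [a b] [c d] /= [h1 h2].
by congr pair; apply: val_inj => //=; lia.
Qed.

Lemma sig_surj (c : cell n.+1) : c.1 < c.2 -> exists2 e, in_stair e & c = sig e.
Proof.
case: c => [a b] /= ab.
have h1 : a < n by have := ltn_ord b; lia.
have h2 : b.-1 < n by have := ltn_ord b; lia.
exists (Ordinal h1, Ordinal h2); first by rewrite /in_stair /=; lia.
congr pair; apply: val_inj; rewrite //= /bump; lia.
Qed.

Definition shrink (A : {set cell n.+1}) : {set cell n} :=
  [set c | in_stair c && (sig c \in A)].
Definition diag m k : {set cell m} := [set c : cell m | (c.1 == c.2 :> nat) && (c.1 < k)].
Definition grow (A : {set cell n}) k : {set cell n.+1} := sig @: A :|: diag n.+1 k.

Definition stair m (A : {set cell m}) := forall c, c \in A -> in_stair c.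

Lemma ideal_stair m (A : {set cell m}) : is_ideal A -> stair A.
Proof. by case/idealP. Qed.

Lemma mem_grow_sig A k e : in_stair e -> (sig e \in grow A k) = (e \in A).
Proof.
move=> se; rewrite /grow inE mem_imset; last exact: sig_inj.
rewrite inE sig1 sig2; move: se; rewrite /in_stair => se.
have -> : (e.1 == e.2.+1 :> nat) = false by apply/eqP; lia.
by rewrite orbF.
Qed.

Lemma notin_sig A (c : cell n.+1) : stair A -> c.2 <= c.1 -> c \notin sig @: A.
Proof.
move=> sA h; apply/imsetP => -[e eA ce].
have := sA e eA; rewrite /in_stair; move: h; rewrite ce sig1 sig2; lia.
Qed.

Lemma mem_grow_diag A k (c : cell n.+1) : stair A -> c.1 = c.2 :> nat ->
  (c \in grow A k) = (c.1 < k).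
Proof.
move=> sA h; rewrite /grow inE (negbTE (notin_sig sA _)); last by rewrite h.
by rewrite inE h eqxx.
Qed.

Lemma mem_grow_gt A k (c : cell n.+1) : stair A -> c.2 < c.1 -> c \notin grow A k.
Proof.
move=> sA h; rewrite /grow inE (negbTE (notin_sig sA _)); last by rewrite ltnW.
rewrite inE; apply/negP => /andP[/eqP]; lia.
Qed.

Lemma cell_cases (c : cell n.+1) :
  [\/ c.1 = c.2 :> nat, c.2 < c.1 | exists2 e, in_stair e & c = sig e].
Proof.
case: (ltngtP c.1 c.2) => h.
- by apply: Or33; apply: sig_surj.
- by apply: Or32.
- by apply: Or31.
Qed.

Lemma diag_eq (c : cell n.+1) : c.1 = c.2 :> nat -> c = (c.1, c.1).
Proof. by case: c => a b /= h; congr pair; apply: val_inj. Qed.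

Lemma shrink_ideal A : is_ideal A -> is_ideal (shrink A).
Proof.
move=> /idealP[A1 A2]; apply/idealP; split.
  by move=> c; rewrite inE => /andP[].
move=> c d; rewrite !inE => /andP[sd dA] sc le; rewrite sc /=.
apply: (A2 _ (sig d)) => //; move: sc le; rewrite /in_stair /cell_le /= /bump; lia.
Qed.

Lemma decomp A : is_ideal A -> A = grow (shrink A) (kk A).
Proof.
move=> iA; have sS : stair (shrink A) by apply/ideal_stair/shrink_ideal.
apply/setP => c; case: (cell_cases c) => [h|h|[e se ->]].
- rewrite mem_grow_diag // {1}(diag_eq h); exact: diag_char.
- rewrite (negbTE (mem_grow_gt _ sS h)); apply/negP => /(ideal_stair iA).
  by rewrite /in_stair; lia.
- by rewrite mem_grow_sig // inE se.
Qed.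

Lemma kk_grow A k : stair A -> k <= n.+1 -> kk (grow A k) = k.
Proof.
move=> sA hk; rewrite /kk.
have -> : [set x : 'I_n.+1 | (x, x) \in grow A k] = [set x : 'I_n.+1 | x < k].
  by apply/setP => x; rewrite [in LHS]inE [in RHS]inE mem_grow_diag.
by rewrite card_lt; lia.
Qed.

Lemma shrink_grow A k : stair A -> shrink (grow A k) = A.
Proof.
move=> sA; apply/setP => e; rewrite inE.
case se: (in_stair e) => /=; first by rewrite mem_grow_sig.
by apply/esym/negP => /sA; rewrite se.
Qed.

Lemma grow_ideal A k : is_ideal A -> kk A <= k <= (kk A).+1 -> is_ideal (grow A k).
Proof.
move=> iA /andP[hk1 hk2]; have sA := ideal_stair iA.
have /idealP[_ A2] := iA.
have kn := kk_le A.
apply/idealP; split.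
  move=> c; case: (cell_cases c) => [h|h|[e se ->]].
  - by rewrite /in_stair h.
  - by rewrite (negbTE (mem_grow_gt _ sA h)).
  - by move: se; rewrite /in_stair sig1 sig2; lia.
move=> c d dG sc le; case: (cell_cases c) => [hc|hc|[e se ce]].
- rewrite mem_grow_diag //; case: (cell_cases d) => [hd|hd|[f sf df]].
  + move: dG; rewrite mem_grow_diag // => hdk.
    by move: le; rewrite /cell_le; lia.
  + by rewrite (negbTE (mem_grow_gt _ sA hd)) in dG.
  + move: dG; rewrite df mem_grow_sig // => fA.
    have hx : (c.1 : nat) < n.
      by move: le sf; rewrite df /cell_le sig1 sig2 /in_stair; have := ltn_ord f.1; lia.
    have : (Ordinal hx, Ordinal hx) \in A.
      apply: (A2 _ f fA); first by rewrite /in_stair.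
      by move: le sf; rewrite df /cell_le sig1 sig2 /in_stair /=; lia.
    by rewrite diag_char //= => h; lia.
- by move: sc; rewrite /in_stair; lia.
- rewrite ce mem_grow_sig //; case: (cell_cases d) => [hd|hd|[f sf df]].
  + move: dG; rewrite mem_grow_diag // => hdk.
    have hy : (d.1 : nat).-1 < n.
      by move: le hd; rewrite ce /cell_le sig1 sig2; have := ltn_ord d.1; lia.
    have : (Ordinal hy, Ordinal hy) \in A.
      by rewrite diag_char //=; move: le hd; rewrite ce /cell_le sig1 sig2; lia.
    move=> yA; apply: (A2 _ _ yA) => //.
    by move: le hd se; rewrite ce /cell_le /in_stair sig1 sig2 /=; lia.
  + by rewrite (negbTE (mem_grow_gt _ sA hd)) in dG.
  + move: dG; rewrite df mem_grow_sig // => fA.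
    apply: (A2 _ f fA) => //.
    by move: le; rewrite ce df /cell_le !sig1 !sig2; lia.
Qed.

Lemma kk_range A : is_ideal A -> kk (shrink A) <= kk A <= (kk (shrink A)).+1.
Proof.
move=> iA; have iS := shrink_ideal iA.
have /idealP[_ A2] := iA.
have rn := kk_le (shrink A); have kn := kk_le A.
apply/andP; split; rewrite leqNgt; apply/negP => h.
- have hx : kk A < n by lia.
  have : (Ordinal hx, Ordinal hx) \in shrink A by rewrite diag_char.
  rewrite inE => /andP[_ sA].
  have hx1 : kk A < n.+1 by lia.
  have : (Ordinal hx1, Ordinal hx1) \in A.
    apply: (A2 _ _ sA); first by rewrite /in_stair.
    by rewrite /cell_le sig1 sig2 /=; lia.
  by rewrite diag_char //= ltnn.
- have hy : (kk (shrink A)).+1 < n.+1 by lia.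
  have yA : (Ordinal hy, Ordinal hy) \in A by rewrite diag_char.
  have hx : kk (shrink A) < n by lia.
  have : (Ordinal hx, Ordinal hx) \in shrink A.
    rewrite inE /in_stair leqnn /=.
    apply: (A2 _ _ yA); first by rewrite /in_stair sig1 sig2.
    by rewrite /cell_le sig1 sig2 /= leqnSn leqnn.
  by rewrite (diag_char iS) /= ltnn.
Qed.

Lemma stairD m (A B : {set cell m}) : stair A -> stair (A :\: B).
Proof. by move=> sA c; rewrite inE => /andP[_ /sA]. Qed.

Lemma card_diff A B k l : stair A -> stair B -> k <= n.+1 ->
  #|grow A k :\: grow B l| = #|A :\: B| + (k - l).
Proof.
move=> sA sB hk.
pose S2 := [set c : cell n.+1 | (c.1 == c.2 :> nat) && (l <= c.1 < k)].
have sAB : stair (A :\: B) := stairD (B:=B) sA.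
have -> : grow A k :\: grow B l = sig @: (A :\: B) :|: S2.
  have mS2 : forall c, (c \in S2) = ((c.1 == c.2 :> nat) && (l <= c.1 < k)).
    by move=> c; rewrite inE.
  apply/setP => c; rewrite (in_setU c (sig @: (A :\: B)) S2) in_setD mS2.
  case: (cell_cases c) => [h|h|[e se ->]].
  - rewrite !mem_grow_diag // (negbTE (notin_sig sAB _)); last by rewrite h.
    by rewrite h eqxx /= -leqNgt.
  - rewrite (negbTE (mem_grow_gt _ sA h)) (negbTE (notin_sig sAB (ltnW h))).
    by rewrite andbF; apply/esym/negP => /andP[/eqP e]; move: h; rewrite e ltnn.
  - rewrite !mem_grow_sig // mem_imset; last exact: sig_inj.
    rewrite inE sig1 sig2.
    have -> : (e.1 == e.2.+1 :> nat) = false by move: se; rewrite /in_stair => se; apply/eqP; lia.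
    by rewrite orbF.
rewrite cardsU.
have -> : sig @: (A :\: B) :&: S2 = set0.
  apply/setP => c; rewrite !inE; apply/negP => /andP[cS /andP[/eqP h _]].
  by move: cS; rewrite (negbTE (notin_sig sAB _)) // h.
rewrite cards0 subn0 card_imset; last exact: sig_inj.
congr addn.
have -> : S2 = [set (x, x) | x in [set x : 'I_n.+1 | l <= x < k]].
  apply/setP => c; rewrite inE; apply/idP/imsetP.
    case/andP=> /eqP h hr; exists c.1; first by rewrite inE.
    exact: diag_eq.
  by case=> x; rewrite inE => hx ->; rewrite /= eqxx.
rewrite card_imset; last by move=> x y [].
rewrite card_range; lia.
Qed.
End Rec.


Section Sums.
Variable n : nat.

Lemma fiber (A' : {set cell n}) : is_ideal A' -> forall A : {set cell n.+1},
  (is_ideal A && (shrink A == A')) =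
  (A == grow A' (kk A')) || (A == grow A' (kk A').+1).
Proof.
move=> iA' A; have sA' := ideal_stair iA'; have kn := kk_le A'.
apply/idP/idP.
  case/andP=> iA /eqP e.
  have := decomp iA; have := kk_range iA; rewrite e => hr ->.
  have [->|->] : kk A = kk A' \/ kk A = (kk A').+1 by lia.
    by rewrite eqxx.
  by rewrite eqxx orbT.
by case/orP=> /eqP ->; rewrite grow_ideal ?shrink_grow ?eqxx //; lia.
Qed.

Lemma sum_shrink (F : {set cell n} -> nat -> nat) :
  \sum_(A : {set cell n.+1} | is_ideal A) F (shrink A) (kk A) =
  \sum_(A' : {set cell n} | is_ideal A') (F A' (kk A') + F A' (kk A').+1).
Proof.
rewrite (partition_big (@shrink n) (@is_ideal n)); last first.
  by move=> A; apply: shrink_ideal.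
apply: eq_bigr => A' iA'.
have sA' := ideal_stair iA'; have kn := kk_le A'.
rewrite (eq_bigl _ _ (fiber iA')).
rewrite (bigD1 (grow A' (kk A'))) /=; last by rewrite eqxx.
have ne : grow A' (kk A') != grow A' (kk A').+1.
  apply/negP => /eqP /(congr1 (@kk n.+1)); rewrite !kk_grow //; lia.
rewrite (big_pred1 (grow A' (kk A').+1)); last first.
  move=> A /=; case: (A =P grow A' (kk A')) => [->|_] /=.
    by rewrite ?eqxx (negbTE ne).
  by rewrite andbT.
by rewrite !shrink_grow // !kk_grow //; lia.
Qed.

Lemma sum2_shrink (F : {set cell n} -> nat -> {set cell n} -> nat -> nat) :
  \sum_(A : {set cell n.+1} | is_ideal A) \sum_(B : {set cell n.+1} | is_ideal B)
     F (shrink A) (kk A) (shrink B) (kk B) =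
  \sum_(A : {set cell n} | is_ideal A) \sum_(B : {set cell n} | is_ideal B)
     (F A (kk A) B (kk B) + F A (kk A) B (kk B).+1 +
      F A (kk A).+1 B (kk B) + F A (kk A).+1 B (kk B).+1).
Proof.
under eq_bigr => A _ do rewrite (sum_shrink (F (shrink A) (kk A))).
rewrite (sum_shrink (fun A a => \sum_(B | is_ideal B) (F A a B (kk B) + F A a B (kk B).+1))).
apply: eq_bigr => A _; rewrite -big_split /=.
by apply: eq_bigr => B _; lia.
Qed.

Lemma diff_shrink (A B : {set cell n.+1}) : is_ideal A -> is_ideal B ->
  #|A :\: B| = #|shrink A :\: shrink B| + (kk A - kk B).
Proof.
move=> iA iB.
rewrite {1}(decomp iA) {1}(decomp iB) card_diff //.
- exact/ideal_stair/shrink_ideal.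
- exact/ideal_stair/shrink_ideal.
- exact: kk_le.
Qed.

End Sums.

Definition Tn n := \sum_(A : {set cell n} | is_ideal A) \sum_(B : {set cell n} | is_ideal B) #|A :\: B|.
Definition Un n := \sum_(A : {set cell n} | is_ideal A) \sum_(B : {set cell n} | is_ideal B) (kk A - kk B).
Definition Rn n := \sum_(A : {set cell n} | is_ideal A) \sum_(B : {set cell n} | is_ideal B) (kk A == kk B : nat).

Lemma four_id a b : (a - b) + (a - b.+1) + (a.+1 - b) + (a.+1 - b.+1) = 4 * (a - b) + (a == b).
Proof. by case: (eqVneq a b) => [->|ne] /=; lia. Qed.

Lemma U_rec n : Un n.+1 = 4 * Un n + Rn n.
Proof.
rewrite /Un /Rn.
transitivity (\sum_(A : {set cell n.+1} | is_ideal A) \sum_(B : {set cell n.+1} | is_ideal B)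
   (fun (_ : {set cell n}) a (_ : {set cell n}) b => a - b) (shrink A) (kk A) (shrink B) (kk B)).
  by [].
rewrite (sum2_shrink (fun _ a _ b => a - b)) big_distrr -big_split /=; apply: eq_bigr => A _.
rewrite big_distrr -big_split /=; apply: eq_bigr => B _.
by rewrite four_id.
Qed.

Lemma T_rec n : Tn n.+1 = 4 * Tn n + Un n.+1.
Proof.
rewrite U_rec /Tn /Un /Rn.
transitivity (\sum_(A : {set cell n.+1} | is_ideal A) \sum_(B : {set cell n.+1} | is_ideal B)
   (fun A' a B' b => #|A' :\: B'| + (a - b)) (shrink A) (kk A) (shrink B) (kk B)).
  by apply: eq_bigr => A iA; apply: eq_bigr => B iB; rewrite diff_shrink.
rewrite (sum2_shrink (fun A' a B' b => #|A' :\: B'| + (a - b))) !big_distrr -!big_split /=; apply: eq_bigr => A _.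
rewrite !big_distrr -!big_split /=; apply: eq_bigr => B _.
have := four_id (kk A) (kk B); lia.
Qed.

Lemma empty_set0 (A : {set cell 0}) : A = set0.
Proof. by apply/setP => -[[x hx] y]; lia. Qed.

Lemma T0 : Tn 0 = 0.
Proof. by apply: big1 => A _; apply: big1 => B _; rewrite (empty_set0 A) set0D cards0. Qed.

Lemma U0 : Un 0 = 0.
Proof.
apply: big1 => A _; apply: big1 => B _; have := kk_le A; lia.
Qed.

Lemma ideal0 (A : {set cell 0}) : is_ideal A.
Proof. by apply/idealP; split => -[[x hx] y]; lia. Qed.

Lemma dist_kk n (F : nat -> nat) :
  \sum_(A : {set cell n} | is_ideal A) F (kk A) = \sum_(0 <= s < n.+1) 'C(n, s) * F s.
Proof.
elim: n F => [|n IH] F.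
  rewrite (big_pred1 set0); last by move=> A; rewrite ideal0; apply/esym/eqP; apply: empty_set0.
  rewrite big_nat1 bin0 mul1n; congr F; have := kk_le (set0 : {set cell 0}); lia.
rewrite (sum_shrink (fun _ k => F k)) /= (IH (fun s => F s + F s.+1)).
rewrite [RHS]big_nat_recl // bin0 mul1n.
under [in RHS]eq_bigr do rewrite binS mulnDl.
rewrite [in RHS]big_split /=.
under [in LHS]eq_bigr do rewrite mulnDr.
rewrite [in LHS]big_split /= [X in X + _ = _]big_nat_recl // bin0 mul1n.
rewrite [X in _ = _ + (X + _)]big_nat_recr //= bin_small // mul0n addn0.
lia.
Qed.

Lemma sum_eq N s (G : nat -> nat) :
  \sum_(0 <= t < N) G t * (s == t) = if s < N then G s else 0.
Proof.
elim: N => [|N IH]; first by rewrite big_geq.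
rewrite big_nat_recr //= IH.
case: (ltngtP s N) => h.
- by rewrite (ltn_trans h (ltnSn _)) muln0 addn0.
- by rewrite ltnNge h muln0.
- by rewrite h ?ltnn ?ltnSn /= ?muln1 ?add0n.
Qed.

Lemma R_closed n : Rn n = 'C(2 * n, n).
Proof.
rewrite /Rn.
under eq_bigr => A _ do rewrite (dist_kk n (fun t => (kk A == t : nat))).
rewrite (dist_kk n (fun s => \sum_(0 <= t < n.+1) 'C(n, t) * (s == t))).
rewrite big_mkord.
under eq_bigr => s _ do rewrite sum_eq (ltn_ord s).
rewrite mul2n -addnn -(Vandermonde n n n).
apply: eq_bigr => i _; rewrite bin_sub //; exact: (ltn_ord i).
Qed.

Lemma keyK n : n.+1 * 'C((2 * n).+2, n.+1) = 2 * (2 * n).+1 * 'C(2 * n, n).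
Proof.
have h1 := mul_bin_diag (2 * n).+2 n.
have h2 := mul_bin_diag (2 * n).+1 n.
have h3 : 'C((2 * n).+1, n.+1) = 'C((2 * n).+1, n).
  by rewrite -[in LHS](_ : (2 * n).+1 - n = n.+1) ?bin_sub //; lia.
rewrite /= in h1 h2; rewrite h3 in h2.
nia.
Qed.

Lemma U_closed n : 2 * Un n = n * 'C(2 * n, n).
Proof.
elim: n => [|n IH]; first by rewrite U0.
rewrite U_rec R_closed mulnDr mulnCA IH.
have := keyK n; rewrite (_ : 2 * n.+1 = (2 * n).+2); last by lia.
nia.
Qed.

Lemma T_closed n : 6 * Tn n = n * (2 * n + 1) * 'C(2 * n, n).
Proof.
elim: n => [|n IH]; first by rewrite T0.
rewrite T_rec.
have hU := U_closed n.+1.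
have := keyK n; rewrite (_ : 2 * n.+1 = (2 * n).+2) in hU *; last by lia.
nia.
Qed.

Lemma wiener_T n : wiener_S n = 2 * Tn n.
Proof.
rewrite /wiener_S /wiener.
transitivity (\sum_(A : {set cell n} | is_ideal A) \sum_(B : {set cell n} | is_ideal B) dd A B).
  by apply: eq_bigr => A iA; apply: eq_bigr => B iB; rewrite gdist_dd.
rewrite /dd mul2n -addnn /Tn.
under eq_bigr => A _ do rewrite big_split.
rewrite big_split /=; congr addn.
exact: exchange_big.
Qed.

Lemma wiener_closed n : 3 * wiener_S n = 2 * n * (2 * n + 1) * 'C(2 * n - 1, n).
Proof.
rewrite wiener_T.
have := T_closed n.
case: n => [|m]; first by rewrite T0.
have -> : 'C(2 * m.+1, m.+1) = 2 * 'C(2 * m.+1 - 1, m.+1).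
  rewrite (_ : 2 * m.+1 = (2 * m + 1).+1); last by lia.
  rewrite binS subSS subn0.
  have e : 'C(2 * m + 1, 2 * m + 1 - m.+1) = 'C(2 * m + 1, m.+1).
    by apply: bin_sub; lia.
  rewrite (_ : 2 * m + 1 - m.+1 = m) in e; last by lia.

  lia.
nia.
Qed.

Lemma wiener_X n : 3 * wiener_S n = n * (2 * n + 1) * 'C(2 * n, n).
Proof. rewrite wiener_T; have := T_closed n; lia. Qed.

From Stdlib Require Import Reals.
From Stdlib Require Import Lra.
From Coquelicot Require Import Coquelicot.

Definition J (k : nat) : R := RInt (fun x => sin x ^ k) 0 (PI / 2).

Lemma sinpow_cont k x : continuous (fun x => sin x ^ k) x.
Proof. apply: ex_derive_continuous; auto_derive; trivial. Qed.

Lemma sinpow_ex k : ex_RInt (fun x => sin x ^ k) 0 (PI / 2).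
Proof. apply: ex_RInt_continuous => z _; apply: sinpow_cont. Qed.

Lemma J0 : J 0 = PI / 2.
Proof. rewrite /J /=. rewrite RInt_const. rewrite /scal /= /mult /=. lra. Qed.

Lemma J1 : J 1 = 1.
Proof.
rewrite /J.
have h : is_RInt (fun x => sin x ^ 1) 0 (PI / 2) (minus ((fun x => - cos x) (PI/2)) ((fun x => - cos x) 0)).
  apply: (is_RInt_derive (fun x => - cos x)) => x _.
    auto_derive; trivial. ring.
  apply: sinpow_cont.
rewrite (is_RInt_unique _ _ _ _ h) /minus /plus /opp /= cos_PI2 cos_0. ring.
Qed.

Lemma Jrec k : J (S (S k)) = INR (S k) / INR (S (S k)) * J k.
Proof.
have hd : is_RInt (fun x => INR (S (S k)) * sin x ^ (S (S k)) - INR (S k) * sin x ^ k) 0 (PI / 2)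
   (minus ((fun x => - cos x * sin x ^ (S k)) (PI/2)) ((fun x => - cos x * sin x ^ (S k)) 0)).
  apply: (is_RInt_derive (fun x => - cos x * sin x ^ (S k))) => x _.
    auto_derive; trivial.
    have e := sin2_cos2 x. rewrite /Rsqr in e.
    change (match k with 0%nat => 1 | _.+1 => INR k + 1 end) with (INR (S k)).
    have c2 : cos x * cos x = 1 - sin x * sin x by lra.
    transitivity (sin x * sin x * sin x ^ k - (cos x * cos x) * INR k.+1 * sin x ^ k).
      ring.
    rewrite c2 (S_INR k.+1) /=; ring.
  apply: ex_derive_continuous; auto_derive; trivial.
have hJ := RInt_correct _ _ _ (sinpow_ex k).
have h2 := is_RInt_plus _ _ _ _ _ _ hd (is_RInt_scal _ _ _ (INR (S k)) _ hJ).
have h3 := is_RInt_scal _ _ _ (/ INR (S (S k))) _ h2.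
have nz : INR (S (S k)) <> 0 by apply: not_0_INR.
have u := is_RInt_unique _ _ _ _ h3.
rewrite /J -(RInt_ext (fun y => scal (/ INR k.+2) (plus (INR k.+2 * sin y ^ k.+2 - INR k.+1 * sin y ^ k) (scal (INR k.+1) (sin y ^ k))))).
  rewrite u.
  set a := INR (S k) in nz *; set b := INR (S (S k)) in nz *.
  rewrite /scal /plus /minus /opp /mult /= cos_PI2 sin_0.
  rewrite /mult /= /plus /= cos_0. field; exact nz.
move=> x _; set a := INR (S k) in nz *; set b := INR (S (S k)) in nz *.
rewrite /scal /= /mult /= /plus /=; field; exact nz.
Qed.

Lemma Jmono k : J (S k) <= J k.
Proof.
apply: RInt_le; [|apply: sinpow_ex|apply: sinpow_ex|].
  have := PI_RGT_0; lra.
move=> x [h1 h2].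
have s0 : 0 <= sin x by apply: sin_ge_0; have := PI_RGT_0; lra.
have s1 : sin x <= 1 by have := SIN_bound x; lra.
have := pow_le _ k s0.
rewrite /= => hk; nra.
Qed.

Definition X (n : nat) : R := INR 'C((2 * n)%nat, n).

Lemma X_rec n : INR n.+1 * X n.+1 = 2 * INR (2 * n)%nat.+1 * X n.
Proof.
rewrite /X; have := keyK n; rewrite (_ : (2 * n.+1)%nat = (2 * n)%nat.+2); last by lia.
move=> h; have := f_equal INR h; rewrite -!multE !mult_INR.
by rewrite (_ : INR 2 = 2) //.
Qed.

Lemma X_pos n : 0 < X n.
Proof. rewrite /X; apply: lt_0_INR; apply/ltP; rewrite bin_gt0; lia. Qed.

Lemma E1 n : J (2 * n)%nat * 4 ^ n = PI / 2 * X n.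
Proof.
elim: n => [|n IH].
  by rewrite /= J0 /X /= ; lra.
rewrite (_ : (2 * n.+1)%nat = (2 * n)%nat.+2); last by lia.
rewrite Jrec.
have hX := X_rec n.
have p1 : 0 < INR n.+1 by apply: lt_0_INR; lia.
have e2 : INR (2 * n)%nat.+2 = 2 * INR n.+1.
  rewrite (_ : (2 * n)%nat.+2 = (2 * n.+1)%nat); last by lia.
  by rewrite -multE mult_INR.
rewrite e2.
have -> : X n.+1 = 2 * INR (2 * n)%nat.+1 * X n / INR n.+1.
  rewrite -hX; field; lra.
transitivity (INR (2 * n)%nat.+1 / (2 * INR n.+1) * 4 * (J (2 * n)%nat * 4 ^ n)).
  rewrite /=; ring.
rewrite IH; field; lra.
Qed.

Lemma E2 n : J (2 * n)%nat.+1 * INR (2 * n)%nat.+1 * X n = 4 ^ n.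
Proof.
elim: n => [|n IH].
  rewrite /= J1 /X /=; lra.
rewrite (_ : (2 * n.+1)%nat = (2 * n)%nat.+2); last by lia.
rewrite Jrec.
have hX := X_rec n.
have p1 : 0 < INR n.+1 by apply: lt_0_INR; lia.
have e2 : INR (2 * n)%nat.+2 = 2 * INR n.+1.
  rewrite (_ : (2 * n)%nat.+2 = (2 * n.+1)%nat); last by lia.
  by rewrite -multE mult_INR.
have p3 : 0 < INR (2 * n)%nat.+3 by apply: lt_0_INR; lia.
rewrite e2.
have -> : X n.+1 = 2 * INR (2 * n)%nat.+1 * X n / INR n.+1.
  rewrite -hX; field; lra.
transitivity (4 * (J (2 * n)%nat.+1 * INR (2 * n)%nat.+1 * X n)).
  field; lra.
rewrite IH /=; ring.
Qed.


Lemma boundA n : 2 * (4 ^ n) ^ 2 <= PI * INR (2 * n)%nat.+1 * X n ^ 2.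
Proof.
have m := Jmono (2 * n)%nat.
have h1 := E1 n; have h2 := E2 n.
have xp := X_pos n.
have ap : 0 < INR (2 * n)%nat.+1 by apply: lt_0_INR; lia.
have pp : 0 < 4 ^ n by apply: pow_lt; lra.
have e1 : J (2 * n)%nat = PI / 2 * X n / 4 ^ n by rewrite -h1; field; lra.
have e2 : J (2 * n)%nat.+1 = 4 ^ n / (INR (2 * n)%nat.+1 * X n).
  rewrite -h2; field; split; lra.
rewrite e1 e2 in m.
have : 4 ^ n / (INR (2 * n)%nat.+1 * X n) * (INR (2 * n)%nat.+1 * X n * 4 ^ n) <=
       PI / 2 * X n / 4 ^ n * (INR (2 * n)%nat.+1 * X n * 4 ^ n).
  apply: Rmult_le_compat_r => //; apply: Rlt_le; apply: Rmult_lt_0_compat => //; nra.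
have -> : 4 ^ n / (INR (2 * n)%nat.+1 * X n) * (INR (2 * n)%nat.+1 * X n * 4 ^ n) = (4 ^ n) ^ 2.
  field; split; lra.
have -> : PI / 2 * X n / 4 ^ n * (INR (2 * n)%nat.+1 * X n * 4 ^ n) = PI * INR (2 * n)%nat.+1 * X n ^ 2 / 2.
  field; lra.
lra.
Qed.

Lemma boundB n : PI * INR n * X n ^ 2 <= (4 ^ n) ^ 2.
Proof.
case: n => [|m]; first by rewrite /= Rmult_0_r Rmult_0_l; lra.
have mo := Jmono (2 * m)%nat.+1.
rewrite (_ : (2 * m)%nat.+2 = (2 * m.+1)%nat) in mo; last by lia.
have h1 := E1 m.+1; have h2 := E2 m; have hX := X_rec m.
have xp := X_pos m; have xp' := X_pos m.+1.
have ap : 0 < INR (2 * m)%nat.+1 by apply: lt_0_INR; lia.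
have bp : 0 < INR m.+1 by apply: lt_0_INR; lia.
have pp : 0 < 4 ^ m by apply: pow_lt; lra.
have e1 : J (2 * m.+1)%nat = PI / 2 * X m.+1 / 4 ^ m.+1.
  rewrite -h1; field; rewrite /=; lra.
have e2 : J (2 * m)%nat.+1 = 4 ^ m.+1 / (2 * INR m.+1 * X m.+1).
  have -> : 2 * INR m.+1 * X m.+1 = 4 * (INR (2 * m)%nat.+1 * X m) by rewrite Rmult_assoc hX; ring.
  rewrite -tech_pow_Rmult -h2; field; split; lra.
rewrite e1 e2 in mo.
have q : 0 < 4 ^ m.+1 by apply: pow_lt; lra.
have : PI / 2 * X m.+1 / 4 ^ m.+1 * (2 * INR m.+1 * X m.+1 * 4 ^ m.+1) <=
       4 ^ m.+1 / (2 * INR m.+1 * X m.+1) * (2 * INR m.+1 * X m.+1 * 4 ^ m.+1).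
  apply: Rmult_le_compat_r => //; apply: Rlt_le; apply: Rmult_lt_0_compat => //; nra.
have -> : 4 ^ m.+1 / (2 * INR m.+1 * X m.+1) * (2 * INR m.+1 * X m.+1 * 4 ^ m.+1) = (4 ^ m.+1) ^ 2.
  field; split; lra.
have -> : PI / 2 * X m.+1 / 4 ^ m.+1 * (2 * INR m.+1 * X m.+1 * 4 ^ m.+1) = PI * INR m.+1 * X m.+1 ^ 2.
  field; lra.
lra.
Qed.

Lemma Rpow32 x : 0 < x -> Rpower x (3 / 2) = x * sqrt x.
Proof.
move=> hx; rewrite (_ : 3 / 2 = 1 + / 2); last by field.
by rewrite Rpower_plus Rpower_1 // Rpower_sqrt.
Qed.

Lemma W_real n : INR (wiener_S n) = INR n * INR (2 * n)%nat.+1 * X n / 3.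
Proof.
have h := f_equal INR (wiener_X n).
rewrite -!multE !mult_INR in h.
rewrite (_ : (2 * n + 1)%nat = (2 * n)%nat.+1) in h; last by lia.
rewrite /X -h (_ : INR 3 = 3); last by rewrite /=; ring.
field.
Qed.

Lemma u_bounds n : (1 <= n)%nat ->
  1 <= INR (wiener_S n) / (2 / (3 * sqrt PI) * 4 ^ n * Rpower (INR n) (3 / 2)) <= 1 + / INR n.
Proof.
move=> hn.
have Np : 1 <= INR n by apply: (le_INR 1); apply/leP.
have ea : INR (2 * n)%nat.+1 = 2 * INR n + 1.
  by rewrite S_INR -multE mult_INR.
have hA := boundA n; have hB := boundB n.
rewrite W_real Rpow32; last lra.
rewrite ea in hA *.
set N := INR n in Np hA hB *.
set P := 4 ^ n in hA hB *.
have Pp : 0 < P by apply: pow_lt; lra.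
have Xp := X_pos n.
set x := X n in Xp hA hB *.
have sp : 0 < sqrt N by apply: sqrt_lt_R0; lra.
have ss := sqrt_sqrt N (ltac:(lra)).
have qp : 0 < sqrt PI by apply: sqrt_lt_R0; have := PI_RGT_0; lra.
have qq := sqrt_sqrt PI (ltac:(have := PI_RGT_0; lra)).
set s := sqrt N in sp ss *.
set q := sqrt PI in qp qq *.
have -> : N * (2 * N + 1) * x / 3 / (2 / (3 * q) * P * (N * s)) = (2 * N + 1) * x * q / (2 * P * s).
  field; repeat split; lra.
set y := x * q * s.
have yp : 0 < y by rewrite /y; apply: Rmult_lt_0_compat => //; apply: Rmult_lt_0_compat.
have y2 : y * y = PI * N * x ^ 2 by rewrite /y; rewrite -qq -ss; ring.
have yP : y <= P by nra.
have ay : 2 * N * P <= (2 * N + 1) * y.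
  have h1 : 2 * N * P * P <= (2 * N + 1) * y * y by nra.
  nra.
have e : (2 * N + 1) * x * q / (2 * P * s) = (2 * N + 1) * y / (2 * P * N).
  rewrite /y -ss; field; lra.
rewrite e; split.
  apply/Rle_div_r; first nra.
  lra.
apply/Rle_div_l; first nra.
have -> : (1 + / N) * (2 * P * N) = 2 * P * (N + 1) by field; lra.
nra.
Qed.

Theorem corollary1p6 :
  (forall n : nat,
      INR (wiener_S n) =
      (INR (2 * n * (2 * n + 1)) / 3 * INR 'C(2 * n - 1, n))%R)
  /\
  Un_cv (fun n : nat =>
           (INR (wiener_S n) /
            (2 / (3 * sqrt PI) * 4 ^ n * Rpower (INR n) (3 / 2)))%R) 1%R.
Proof.
split.
  move=> n.
  have h : INR 3 * INR (wiener_S n) = INR (2 * n * (2 * n + 1)) * INR 'C(2 * n - 1, n).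
    by rewrite -!mult_INR; congr INR; exact: (wiener_closed n).
  rewrite (_ : INR 3 = 3) in h; last by rewrite /=; ring.
  lra.
apply/is_lim_seq_Reals/is_lim_seq_incr_1.
apply: (is_lim_seq_le_le (fun _ => 1) _ (fun n => 1 + / INR n.+1)).
- by move=> n; apply: u_bounds; apply/leP; lia.
- exact: is_lim_seq_const.
- have h0 : is_lim_seq (fun n => / INR n) 0.
    have := is_lim_seq_inv INR p_infty is_lim_seq_INR ltac:(by []).
    by [].
  have h1 := proj1 (is_lim_seq_incr_1 _ _) h0.
  have := is_lim_seq_plus' _ _ 1 0 (is_lim_seq_const 1) h1.
  by rewrite Rplus_0_r.
Qed.
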